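(* Let $n\ge2$ be an integer and $p=n(n+1)$. Consider all pairs $(f,c)$ with $c>0$ and $f$ a real solution on $(-1,1)$ of $(1-s^2)f''-2sf'+pf=0$ that extends continuously to $s=1$ with $f(1)>1$, for which there is a point $x\in(-1,1)$ with $f(x)=h_c(x)$, $f'(x)=h_c'(x)$, and $f>h_c$ on $(x,1]$. Then the smallest $c$ for which such a pair exists is $c=\frac{1+z_p}{1-z_p}$.
   Context: $h_c(s)=\big(\frac{1+s}{2}\big)^p-c^p\big(\frac{1-s}{2}\big)^p$ for $s\in[-1,1]$. $L_n$ denotes the Legendre polynomial $L_n(s)=\frac{1}{2^nn!}\frac{d^n}{ds^n}(s^2-1)^n$ (so $L_n(1)=1$), and $z_p$ is the largest zero of $L_n$ in $(-1,1)$. *)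

(* Defs.v *)
From Stdlib Require Import Reals Lra Arith Factorial.
Open Scope R_scope.

Definition pexp (n : nat) : nat := (n * (n + 1))%nat.

Definition hc (n : nat) (c s : R) : R :=
  ((1 + s) / 2) ^ pexp n - c ^ pexp n * ((1 - s) / 2) ^ pexp n.

(* L is the Legendre polynomial L_n, via Rodrigues' formula:
   L(s) = 1/(2^n n!) d^n/ds^n (s^2-1)^n, with the iterated derivatives
   g 0, ..., g n of (s^2-1)^n taken everywhere on R. *)
Definition is_legendre (n : nat) (L : R -> R) : Prop :=
  exists g : nat -> R -> R,
    (forall s, g 0%nat s = (s ^ 2 - 1) ^ n) /\
    (forall k s, (k < n)%nat -> derivable_pt_lim (g k) s (g (S k) s)) /\
    (forall s, L s = g n s / (2 ^ n * INR (fact n))).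

Definition is_largest_zero (L : R -> R) (z : R) : Prop :=
  -1 < z < 1 /\ L z = 0 /\ (forall y, -1 < y < 1 -> L y = 0 -> y <= z).

Definition legendre_sol (n : nat) (f : R -> R) : Prop :=
  exists f1 f2 : R -> R,
    forall s, -1 < s < 1 ->
      derivable_pt_lim f s (f1 s) /\ derivable_pt_lim f1 s (f2 s) /\
      (1 - s ^ 2) * f2 s - 2 * s * f1 s + INR (pexp n) * f s = 0.

(* admissible pair (f,c): c > 0, f a solution on (-1,1) which extends
   continuously to s = 1 (the extension value being f 1), f(1) > 1, and there
   is x in (-1,1) where f touches h_c (same value and derivative) with
   f > h_c on (x,1]. *)
Definition admissible (n : nat) (f : R -> R) (c : R) : Prop :=
  0 < c /\ legendre_sol n f /\
  limit1_in f (fun s => -1 < s < 1) (f 1) 1 /\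
  f 1 > 1 /\
  exists x d, -1 < x < 1 /\ f x = hc n c x /\
    derivable_pt_lim f x d /\ derivable_pt_lim (hc n c) x d /\
    (forall s, x < s <= 1 -> f s > hc n c s).

Definition admissible_c (n : nat) (c : R) : Prop :=
  exists f : R -> R, admissible n f c.

(* Main.v *)
Require Import Defs.
From Stdlib Require Import Reals Lra Lia FunctionalExtensionality Factorial.
Open Scope R_scope.

Lemma dpl_ext (f g : R -> R) x l :
  (forall y, f y = g y) -> derivable_pt_lim f x l -> derivable_pt_lim g x l.
Proof.
  intros H D. replace g with f; [exact D|]. apply functional_extensionality; exact H.
Qed.

Lemma dpl_local (f g : R -> R) x l d :
  0 < d -> (forall y, Rabs (y - x) < d -> f y = g y) ->
  derivable_pt_lim f x l -> derivable_pt_lim g x l.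
Proof.
  intros Hd H D eps Heps. destruct (D eps Heps) as [del Hdel].
  assert (Hm : 0 < Rmin del d) by (apply Rmin_pos; [apply cond_pos|lra]).
  exists (mkposreal _ Hm). intros h Hh Hh2. simpl in Hh2.
  rewrite <- !H.
  - apply Hdel; auto. apply Rlt_le_trans with (1:=Hh2). apply Rmin_l.
  - rewrite Rminus_diag, Rabs_R0; lra.
  - replace (x + h - x) with h by ring. apply Rlt_le_trans with (1:=Hh2). apply Rmin_r.
Qed.

Lemma pow_lt_strict x y n : 0 <= x < y -> (0 < n)%nat -> x ^ n < y ^ n.
Proof.
  intros [H1 H2] Hn. induction n as [|n IH]; [lia|].
  destruct n as [|n]. { simpl; lra. }
  assert (IH' : x ^ S n < y ^ S n) by (apply IH; lia).
  simpl in *. assert (0 <= x * x ^ n) by (apply Rmult_le_pos; [lra| apply pow_le; lra]).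
  nra.
Qed.

Lemma pow_le_mono x y n : 0 <= x <= y -> x ^ n <= y ^ n.
Proof.
  intros H. destruct n. simpl; lra. destruct (Req_dec x y). subst; lra.
  left; apply pow_lt_strict; lia || lra.
Qed.

Lemma dpl_affine a b s : derivable_pt_lim (fun y => a + b * y) s b.
Proof.
  apply dpl_ext with (f := (fct_cte a + mult_real_fct b id)%F).
  { intros y; unfold plus_fct, fct_cte, mult_real_fct, id; ring. }
  assert (H : derivable_pt_lim (fct_cte a + mult_real_fct b id)%F s (0 + b * 1)).
  { apply derivable_pt_lim_plus. apply derivable_pt_lim_const.
    apply derivable_pt_lim_scal. apply derivable_pt_lim_id. }
  rewrite Rmult_1_r, Rplus_0_l in H; exact H.
Qed.

Lemma dpl_affine_pow a b m s :
  derivable_pt_lim (fun y => (a + b * y) ^ m) s (INR m * (a + b * s) ^ (pred m) * b).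
Proof.
  apply dpl_ext with (f := (comp (fun y => y ^ m) (fun y => a + b * y))).
  { intros; reflexivity. }
  apply derivable_pt_lim_comp. apply dpl_affine. apply derivable_pt_lim_pow.
Qed.

Lemma mvt (f f' : R -> R) a b : a < b ->
  (forall c, a <= c <= b -> derivable_pt_lim f c (f' c)) ->
  exists c, a < c < b /\ f b - f a = f' c * (b - a).
Proof.
  intros H1 H2. destruct (MVT_cor2 f f' a b H1 H2) as [c [H3 H4]]. eauto.
Qed.

Lemma dpl_sign (F : R -> R) x d del : derivable_pt_lim F x d -> F x = 0 -> 0 < del ->
  (forall y, x < y < x + del -> F y > 0) -> 0 <= d.
Proof.
  intros D H0 Hdel Hpos. destruct (Rle_lt_dec 0 d) as [|Hd]; auto.
  destruct (D (- d / 2)) as [e He]. lra.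
  set (h := Rmin e del / 2).
  assert (Hh : 0 < h). { unfold h. assert (0 < Rmin e del) by (apply Rmin_pos; [apply cond_pos|lra]). lra. }
  assert (Hh2 : h < e /\ h < del).
  { unfold h. pose proof (Rmin_l e del); pose proof (Rmin_r e del); pose proof (cond_pos e).
    assert (0 < Rmin e del) by (apply Rmin_pos; [apply cond_pos|lra]). lra. }
  specialize (He h). assert (h <> 0) by lra.
  assert (Rabs h < e) by (rewrite Rabs_pos_eq; lra).
  specialize (He H H1). rewrite H0 in He.
  specialize (Hpos (x + h) ltac:(lra)).
  assert (0 < (F (x + h) - 0) / h) by (apply Rdiv_lt_0_compat; lra).
  apply Rabs_def2 in He. lra.
Qed.

Lemma dpl_plus2 (f g : R -> R) x a b :
  derivable_pt_lim f x a -> derivable_pt_lim g x b ->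
  derivable_pt_lim (fun y => f y + g y) x (a + b).
Proof. intros; apply derivable_pt_lim_plus; auto. Qed.

Lemma dpl_mult2 (f g : R -> R) x a b :
  derivable_pt_lim f x a -> derivable_pt_lim g x b ->
  derivable_pt_lim (fun y => f y * g y) x (a * g x + f x * b).
Proof. intros; apply derivable_pt_lim_mult; auto. Qed.

Lemma dpl_const c x : derivable_pt_lim (fun _ => c) x 0.
Proof. apply derivable_pt_lim_const. Qed.

Lemma dpl_id x : derivable_pt_lim (fun y => y) x 1.
Proof. apply derivable_pt_lim_id. Qed.

Lemma dpl_eq (f : R -> R) x a b : derivable_pt_lim f x a -> a = b -> derivable_pt_lim f x b.
Proof. intros; subst; auto. Qed.

Fixpoint ffR (m k : nat) : R :=
  match k with O => 1 | S k' => ffR m k' * INR (m - k') end.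

Lemma ffR_pos m k : (k <= m)%nat -> 0 < ffR m k.
Proof.
  induction k; simpl; intros. lra.
  apply Rmult_lt_0_compat. apply IHk; lia. apply lt_0_INR; lia.
Qed.

Lemma ffR_zero m k : (m < k)%nat -> ffR m k = 0.
Proof.
  induction k; simpl; intros. lia.
  destruct (Nat.eq_dec k m). subst. rewrite Nat.sub_diag. simpl; ring.
  rewrite IHk by lia. ring.
Qed.

Definition GG (n k : nat) (s : R) : R :=
  sum_f_R0 (fun i => C n i * 2 ^ (n - i) * ffR (n + i) k * (s - 1) ^ (n + i - k)) n.

Lemma dpl_sum (F : nat -> R -> R) (F' : nat -> R) x N :
  (forall i, (i <= N)%nat -> derivable_pt_lim (F i) x (F' i)) ->
  derivable_pt_lim (fun s => sum_f_R0 (fun i => F i s) N) x (sum_f_R0 F' N).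
Proof.
  induction N; intros H; simpl.
  - apply H; lia.
  - apply dpl_plus2 with (f := fun s => sum_f_R0 (fun i => F i s) N) (g := F (S N)).
    apply IHN; intros; apply H; lia. apply H; lia.
Qed.

Lemma GG_der n k s : derivable_pt_lim (GG n k) s (GG n (S k) s).
Proof.
  unfold GG. apply dpl_sum with (F := fun i s => C n i * 2 ^ (n - i) * ffR (n + i) k * (s - 1) ^ (n + i - k)).
  intros i _.
  apply dpl_ext with (f := fun y => (C n i * 2 ^ (n - i) * ffR (n + i) k) * (-1 + 1 * y) ^ (n + i - k)).
  { intros; f_equal; f_equal; ring. }
  eapply dpl_eq. apply dpl_mult2. apply dpl_const. apply dpl_affine_pow.
  simpl. replace (Init.Nat.pred (n + i - k)) with (n + i - S k)%nat by lia.
  replace (-1 + 1 * s) with (s - 1) by ring. ring.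
Qed.

Lemma C_n0 n : C n 0 = 1.
Proof. unfold C. rewrite Nat.sub_0_r. simpl. field. apply INR_fact_neq_0. Qed.
Lemma C_nn n : C n n = 1.
Proof. unfold C. rewrite Nat.sub_diag. simpl. field. apply INR_fact_neq_0. Qed.

Lemma GG0 n s : GG n 0 s = (s ^ 2 - 1) ^ n.
Proof.
  unfold GG. replace ((s ^ 2 - 1) ^ n) with ((s - 1) ^ n * ((s - 1) + 2) ^ n).
  2:{ rewrite <- Rpow_mult_distr. f_equal. ring. }
  rewrite binomial, scal_sum. apply sum_eq. intros i Hi. simpl ffR.
  rewrite Nat.sub_0_r, pow_add. ring.
Qed.

Lemma dpl_sq1 s : derivable_pt_lim (fun y => y ^ 2 - 1) s (2 * s).
Proof.
  apply dpl_ext with (f := fun y => y ^ 2 + (-1)). intros; ring.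
  eapply dpl_eq. apply dpl_plus2. apply derivable_pt_lim_pow. apply dpl_const. simpl; ring.
Qed.

Lemma GG1 n s : (1 <= n)%nat -> (s ^ 2 - 1) * GG n 1 s = 2 * INR n * s * GG n 0 s.
Proof.
  intros Hn.
  assert (D1 := GG_der n 0 s).
  assert (D2 : derivable_pt_lim (GG n 0) s (INR n * (s ^ 2 - 1) ^ (pred n) * (2 * s))).
  { apply dpl_ext with (f := comp (fun y => y ^ n) (fun y => y ^ 2 - 1)).
    intros; unfold comp; rewrite GG0; auto.
    apply derivable_pt_lim_comp. apply dpl_sq1. apply derivable_pt_lim_pow. }
  rewrite (uniqueness_limite _ _ _ _ D1 D2), GG0.
  destruct n. lia. simpl. ring.
Qed.

Definition Eform (n m : nat) (s : R) : R :=
  (s ^ 2 - 1) * GG n (S m) s + 2 * (INR m - INR n) * s * GG n m s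
  + (INR m * (INR m - 1) - 2 * INR n * INR m) * GG n (pred m) s.

Lemma Eform_der n m s : derivable_pt_lim (Eform n m) s (Eform n (S m) s).
Proof.
  unfold Eform.
  set (al := 2 * (INR m - INR n)). set (be := INR m * (INR m - 1) - 2 * INR n * INR m).
  apply dpl_ext with (f := fun y => ((y ^ 2 - 1) * GG n (S m) y + (al * y) * GG n m y)
     + be * GG n (pred m) y).
  { intros; unfold al; ring. }
  eapply dpl_eq. apply dpl_plus2. apply dpl_plus2.
  apply dpl_mult2. apply dpl_sq1. apply GG_der.
  apply dpl_mult2. apply dpl_ext with (f := fun y => al * y). auto.
  eapply dpl_eq. apply dpl_mult2. apply dpl_const. apply dpl_id. reflexivity.
  apply GG_der.
  apply dpl_mult2. apply dpl_const. apply GG_der.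
  unfold al, be. simpl pred. rewrite S_INR.
  destruct m as [|m]. simpl. ring.
  simpl pred. ring.
Qed.

Lemma Eform_zero n m s : (1 <= n)%nat -> Eform n m s = 0.
Proof.
  intros Hn. revert s. induction m; intros s.
  - unfold Eform. simpl pred. rewrite (GG1 n s Hn). simpl INR. ring.
  - assert (D1 := Eform_der n m s).
    assert (D2 : derivable_pt_lim (Eform n m) s 0).
    { apply dpl_ext with (f := fun _ => 0). intros; rewrite IHm; auto. apply dpl_const. }
    exact (uniqueness_limite _ _ _ _ D1 D2).
Qed.

Lemma GG_ode n s : (1 <= n)%nat ->
  (1 - s ^ 2) * GG n (S (S n)) s - 2 * s * GG n (S n) s + INR (n * (n + 1)) * GG n n s = 0.
Proof.
  intros Hn. pose proof (Eform_zero n (S n) s Hn) as H. unfold Eform in H.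
  simpl pred in H. rewrite mult_INR, plus_INR, S_INR in *. simpl INR in *. lra.
Qed.

Lemma GG_2n n s : (1 <= n)%nat -> 0 < GG n (n + n) s.
Proof.
  intros Hn. unfold GG. destruct n as [|n']. lia.
  rewrite tech5. rewrite sum_eq_R0.
  - rewrite Nat.sub_diag, C_nn, Nat.sub_diag. simpl pow at 1. simpl (_ ^ 0).
    rewrite Rplus_0_l. rewrite !Rmult_1_l, Rmult_1_r. apply ffR_pos. lia.
  - intros i Hi. rewrite ffR_zero by lia. ring.
Qed.

Lemma GG_n1 n : (1 <= n)%nat -> 0 < GG n n 1.
Proof.
  intros Hn. unfold GG. rewrite decomp_sum by lia. rewrite sum_eq_R0.
  - rewrite C_n0, Nat.add_0_r, Nat.sub_0_r, Nat.sub_diag. simpl (_ ^ 0).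
    rewrite Rplus_0_r, Rmult_1_r, Rmult_1_l. apply Rmult_lt_0_compat.
    apply pow_lt; lra. apply ffR_pos; lia.
  - intros i Hi. replace (n + S i - n)%nat with (S i) by lia.
    rewrite Rminus_diag, pow_i by lia. ring.
Qed.

Lemma GG_simple n z : (1 <= n)%nat -> z ^ 2 <> 1 -> GG n n z = 0 -> GG n (S n) z = 0 -> False.
Proof.
  intros Hn Hz H0 H1.
  assert (forall k, GG n (n + k) z = 0 /\ GG n (S (n + k)) z = 0).
  { induction k. rewrite Nat.add_0_r; auto.
    destruct IHk as [A B]. split. rewrite <- plus_n_Sm; auto.
    pose proof (Eform_zero n (S (n + k)) z Hn) as E. unfold Eform in E. simpl pred in E.
    rewrite A, B in E. rewrite <- plus_n_Sm.
    assert ((z ^ 2 - 1) * GG n (S (S (n + k))) z = 0) by lra.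
    apply Rmult_integral in H. destruct H; auto. lra. }
  destruct (H n) as [A _]. pose proof (GG_2n n z Hn). lra.
Qed.

Definition hc1 (n : nat) (c s : R) : R :=
  INR (pexp n) / 2 * (((1 + s) / 2) ^ pred (pexp n) + c ^ pexp n * ((1 - s) / 2) ^ pred (pexp n)).
Definition hc2 (n : nat) (c s : R) : R :=
  INR (pexp n) * INR (pred (pexp n)) / 4 *
   (((1 + s) / 2) ^ pred (pred (pexp n)) - c ^ pexp n * ((1 - s) / 2) ^ pred (pred (pexp n))).
Definition DH (n : nat) (c s : R) : R :=
  INR (pexp n) * INR (pexp n) * ((1 + s) / 2) * ((1 - s) / 2) *
   (((1 + s) / 2) ^ pred (pred (pexp n)) - c ^ pexp n * ((1 - s) / 2) ^ pred (pred (pexp n))).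

Lemma pexp_ge n : (2 <= n)%nat -> exists q, pexp n = S (S (S (S (S (S q))))).
Proof. intros. exists (pexp n - 6)%nat. unfold pexp. nia. Qed.

Lemma hc_der n c s : derivable_pt_lim (hc n c) s (hc1 n c s).
Proof.
  unfold hc, hc1.
  apply dpl_ext with (f := fun y => (/2 + /2 * y) ^ pexp n + (- c ^ pexp n) * (/2 + (-/2) * y) ^ pexp n).
  { intros y. replace (/2 + /2 * y) with ((1 + y) / 2) by field. replace (/2 + - / 2 * y) with ((1 - y) / 2) by field. ring. }
  eapply dpl_eq. apply dpl_plus2. apply dpl_affine_pow. apply dpl_mult2. apply dpl_const. apply dpl_affine_pow.
  replace (/2 + /2 * s) with ((1 + s) / 2) by field.
  replace (/2 + - / 2 * s) with ((1 - s) / 2) by field. field.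
Qed.

Lemma hc1_der n c s : derivable_pt_lim (hc1 n c) s (hc2 n c s).
Proof.
  unfold hc1, hc2.
  apply dpl_ext with (f := fun y => INR (pexp n) / 2 * ((/2 + /2 * y) ^ pred (pexp n) + c ^ pexp n * (/2 + (-/2) * y) ^ pred (pexp n))).
  { intros y. replace (/2 + /2 * y) with ((1 + y) / 2) by field. replace (/2 + - / 2 * y) with ((1 - y) / 2) by field. ring. }
  eapply dpl_eq. apply dpl_mult2. apply dpl_const. apply dpl_plus2. apply dpl_affine_pow. apply dpl_mult2. apply dpl_const. apply dpl_affine_pow.
  replace (/2 + /2 * s) with ((1 + s) / 2) by field.
  replace (/2 + - / 2 * s) with ((1 - s) / 2) by field. field.
Qed.

Lemma hc_ode n c s : (2 <= n)%nat ->
  (1 - s ^ 2) * hc2 n c s - 2 * s * hc1 n c s + INR (pexp n) * hc n c s = DH n c s.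
Proof.
  intros Hn. destruct (pexp_ge n Hn) as [q Hq]. unfold hc, hc1, hc2, DH. rewrite Hq.
  simpl pred. rewrite !S_INR. simpl pow. field.
Qed.

Lemma DH_sign n c u t : (2 <= n)%nat -> 0 < c -> -1 < u -> u < t -> t < 1 ->
  0 <= DH n c u -> 0 < DH n c t.
Proof.
  intros Hn Hc H1 H2 H3 H4. destruct (pexp_ge n Hn) as [q Hq].
  unfold DH in *. rewrite Hq in *. simpl pred in *.
  set (P := INR (S (S (S (S (S (S q))))))) in *.
  assert (HP : 0 < P) by (unfold P; apply lt_0_INR; lia).
  set (au := (1 + u) / 2) in *. set (bu := (1 - u) / 2) in *.
  set (at_ := (1 + t) / 2). set (bt := (1 - t) / 2).
  set (m := S (S (S (S q)))) in *.
  assert (0 < au) by (unfold au; lra). assert (0 < bu) by (unfold bu; lra).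
  assert (0 < at_) by (unfold at_; lra). assert (0 < bt) by (unfold bt; lra).
  assert (HC : 0 < c ^ S (S (S (S (S (S q)))))) by (apply pow_lt; lra).
  assert (E1 : 0 <= au ^ m - c ^ S (S (S (S (S (S q))))) * bu ^ m).
  { assert (0 < P * P * au * bu) by (repeat apply Rmult_lt_0_compat; lra).
    apply Rmult_le_reg_l with (P * P * au * bu); auto. rewrite Rmult_0_r. exact H4. }
  assert (au ^ m < at_ ^ m) by (apply pow_lt_strict; [unfold au, at_; lra | unfold m; lia]).
  assert (bt ^ m < bu ^ m) by (apply pow_lt_strict; [unfold bu, bt; lra | unfold m; lia]).
  assert (0 < at_ ^ m - c ^ S (S (S (S (S (S q))))) * bt ^ m) by nra.
  repeat apply Rmult_lt_0_compat; try lra. unfold m in *; lra.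
Qed.

Lemma hc1_pos n c s : (2 <= n)%nat -> 0 < c -> -1 < s < 1 -> 0 < hc1 n c s.
Proof.
  intros Hn Hc Hs. unfold hc1. destruct (pexp_ge n Hn) as [q Hq]. rewrite Hq.
  assert (0 < INR (S (S (S (S (S (S q))))))) by (apply lt_0_INR; lia).
  assert (0 < ((1 + s) / 2) ^ pred (S (S (S (S (S (S q))))))) by (apply pow_lt; lra).
  assert (0 < c ^ S (S (S (S (S (S q)))))) by (apply pow_lt; lra).
  assert (0 < ((1 - s) / 2) ^ pred (S (S (S (S (S (S q))))))) by (apply pow_lt; lra).
  assert (0 < c ^ S (S (S (S (S (S q))))) * ((1 - s) / 2) ^ pred (S (S (S (S (S (S q))))))) by (apply Rmult_lt_0_compat; auto).
  apply Rmult_lt_0_compat; lra.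
Qed.

Lemma hc_pos n c s : (2 <= n)%nat -> 0 < c -> s <= 1 -> c * (1 - s) < 1 + s -> 0 < hc n c s.
Proof.
  intros Hn Hc Hs H. unfold hc. destruct (pexp_ge n Hn) as [q Hq]. rewrite Hq.
  rewrite <- Rpow_mult_distr. apply Rlt_Rminus. apply pow_lt_strict; [|lia].
  split. apply Rmult_le_pos; lra. lra.
Qed.

Lemma hc_one n c : (2 <= n)%nat -> hc n c 1 = 1.
Proof.
  intros Hn. unfold hc. destruct (pexp_ge n Hn) as [q Hq]. rewrite Hq.
  replace ((1 + 1) / 2) with 1 by field. replace ((1 - 1) / 2) with 0 by field.
  rewrite pow1, pow_i by lia. ring.
Qed.

Lemma hc_c0 n z : -1 < z < 1 -> hc n ((1 + z) / (1 - z)) z = 0.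
Proof.
  intros Hz. unfold hc. rewrite <- Rpow_mult_distr.
  replace ((1 + z) / (1 - z) * ((1 - z) / 2)) with ((1 + z) / 2) by (field; lra). ring.
Qed.

Lemma cont_of_dpl f x l : derivable_pt_lim f x l -> continuity_pt f x.
Proof. intros H. apply derivable_continuous_pt. exists l. exact H. Qed.

Lemma cont_eps f x0 eps : continuity_pt f x0 -> 0 < eps ->
  exists alp, 0 < alp /\ forall x, Rabs (x - x0) < alp -> Rabs (f x - f x0) < eps.
Proof.
  intros H He. destruct (H eps He) as [alp [Ha Hx]]. exists alp; split; auto.
  intros x Hxa. destruct (Req_dec x x0). subst. rewrite Rminus_diag, Rabs_R0; lra.
  apply (Hx x). split. split. exact I. auto. exact Hxa.
Qed.

Lemma lim1_eps f l eps : limit1_in f (fun s => -1 < s < 1) l 1 -> 0 < eps ->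
  exists alp, 0 < alp /\ forall x, -1 < x < 1 -> Rabs (x - 1) < alp -> Rabs (f x - l) < eps.
Proof.
  intros H He. destruct (H eps He) as [alp [Ha Hx]]. exists alp; split; auto.
  intros x Hx1 Hx2. apply (Hx x). split; auto.
Qed.

Lemma eq_of_close u v : (forall eps, 0 < eps -> Rabs (u - v) < eps) -> u = v.
Proof.
  intros H. destruct (Req_dec u v); auto. exfalso.
  specialize (H (Rabs (u - v))). assert (0 < Rabs (u - v)).
  { apply Rabs_pos_lt. lra. } specialize (H H1). lra.
Qed.

Lemma const_of_zero_der (V : R -> R) a b s t :
  (forall y, a < y < b -> derivable_pt_lim V y 0) -> a < s < b -> a < t < b -> V s = V t.
Proof.
  intros H Hs Ht.
  assert (K : forall u v, a < u < b -> a < v < b -> u < v -> V u = V v).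
  { intros u v Hu Hv Huv. destruct (mvt V (fun _ => 0) u v Huv) as [c [_ Hc]].
    intros; apply H; lra. lra. }
  destruct (Rtotal_order s t) as [|[|]]. apply K; auto. subst; auto. symmetry; apply K; auto.
Qed.

Definition Wf (n : nat) (c : R) (F F1 : R -> R) (y : R) : R :=
  (1 - y ^ 2) * (F1 y * hc n c y - F y * hc1 n c y).

Lemma W_der n c (F F1 F2 : R -> R) s : (2 <= n)%nat ->
  derivable_pt_lim F s (F1 s) -> derivable_pt_lim F1 s (F2 s) ->
  (1 - s ^ 2) * F2 s - 2 * s * F1 s + INR (pexp n) * F s = 0 ->
  derivable_pt_lim (Wf n c F F1) s (- F s * DH n c s).
Proof.
  intros Hn D1 D2 E. unfold Wf.
  apply dpl_ext with (f := fun y => (1 + (-1) * y ^ 2) * (F1 y * hc n c y + (-1) * (F y * hc1 n c y))).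
  { intros; ring. }
  eapply dpl_eq. apply dpl_mult2. apply dpl_plus2. apply dpl_const.
  apply dpl_mult2. apply dpl_const. apply derivable_pt_lim_pow.
  apply dpl_plus2. apply dpl_mult2; [exact D2|apply hc_der].
  apply dpl_mult2. apply dpl_const. apply dpl_mult2; [exact D1|apply hc1_der].
  rewrite <- (hc_ode n c s Hn). simpl INR. simpl pred.
  transitivity (- F s * ((1 - s ^ 2) * hc2 n c s - 2 * s * hc1 n c s + INR (pexp n) * hc n c s)
    + hc n c s * ((1 - s ^ 2) * F2 s - 2 * s * F1 s + INR (pexp n) * F s)).
  ring. rewrite E. ring.
Qed.

Lemma ratio_der (F G : R -> R) F1 G1 s : derivable_pt_lim F s F1 -> derivable_pt_lim G s G1 ->
  G s <> 0 -> derivable_pt_lim (fun y => F y / G y) s ((F1 * G s - G1 * F s) / (G s) ^ 2).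
Proof.
  intros. apply dpl_ext with (f := (F / G)%F). intros; reflexivity.
  eapply dpl_eq. apply derivable_pt_lim_div; [exact H|exact H0|exact H1]. unfold Rsqr; simpl; field. exact H1.
Qed.

Lemma dpl_ln1m s : s < 1 -> derivable_pt_lim (fun y => ln (1 - y)) s (- / (1 - s)).
Proof.
  intros Hs. apply dpl_ext with (f := comp ln (fun y => 1 + (-1) * y)).
  { intros; unfold comp; f_equal; ring. }
  eapply dpl_eq. apply derivable_pt_lim_comp. apply dpl_affine.
  apply derivable_pt_lim_ln. lra. replace (1 + -1 * s) with (1 - s) by ring. ring.
Qed.

Lemma unbounded (R0 R1 : R -> R) b k B : b < 1 -> 0 < k ->
  (forall s, b < s < 1 -> derivable_pt_lim R0 s (R1 s) /\ k / (1 - s) <= R1 s) ->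
  (forall s, b < s < 1 -> Rabs (R0 s) <= B) -> False.
Proof.
  intros Hb Hk HD HB.
  set (phi := fun s => R0 s + k * ln (1 - s)).
  set (s0 := (b + 1) / 2).
  set (Y := (B - phi s0) / k).
  set (X := 1 + Rabs (ln (1 - s0)) + Rabs Y).
  set (t := 1 - exp (- X)).
  assert (He : exp (- X) < 1 - s0).
  { rewrite <- (exp_ln (1 - s0)) by (unfold s0; lra). apply exp_increasing.
    unfold X. pose proof (Rle_abs (- ln (1 - s0))). rewrite Rabs_Ropp in H.
    pose proof (Rabs_pos Y). lra. }
  assert (Hep : 0 < exp (- X)) by apply exp_pos.
  assert (Ht : s0 < t < 1) by (unfold t; lra).
  assert (Hs0 : b < s0 < 1) by (unfold s0; lra).
  destruct (mvt phi (fun s => R1 s - k / (1 - s)) s0 t) as [xi [Hxi Hm]]. lra.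
  { intros c Hc. unfold phi. unfold Rminus at 1. apply dpl_plus2. apply HD; lra.
    eapply dpl_eq. apply dpl_mult2. apply dpl_const. apply dpl_ln1m. lra.
    cbv beta. field. lra. }
  assert (HR := proj2 (HD xi ltac:(lra))).
  assert (0 <= (R1 xi - k / (1 - xi)) * (t - s0)) by (apply Rmult_le_pos; lra).
  assert (Hphit : phi t = R0 t - k * X).
  { unfold phi, t. replace (1 - (1 - exp (- X))) with (exp (- X)) by ring. rewrite ln_exp. ring. }
  assert (HkY : k * Y = B - phi s0) by (unfold Y; field; lra).
  assert (k * Y <= k * Rabs Y) by (apply Rmult_le_compat_l; [lra| apply Rle_abs]).
  assert (0 <= k * Rabs (ln (1 - s0))) by (apply Rmult_le_pos; [lra| apply Rabs_pos]).
  assert (HXk : k * X = k + k * Rabs (ln (1 - s0)) + k * Rabs Y) by (unfold X; ring).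
  specialize (HB t ltac:(lra)). pose proof (Rle_abs (R0 t)). lra.
Qed.

Lemma touch (G Hh : R -> R) z t0 q H : z < t0 -> q < 0 -> 0 < H ->
  derivable_pt_lim G z 0 -> G z = 0 -> derivable_pt_lim Hh z H -> Hh z = 0 ->
  (forall t, z < t < t0 -> G t < q * Hh t) -> False.
Proof.
  intros Hz Hq HH DG G0 DH0 H0 Hlt.
  destruct (DG (- q * H / 2)) as [d1 Hd1]. { assert (0 < - q * H) by (apply Rmult_lt_0_compat; lra). lra. }
  destruct (DH0 (H / 2)) as [d2 Hd2]. lra.
  set (h := Rmin (Rmin d1 d2) (t0 - z) / 2).
  assert (Hm : 0 < Rmin (Rmin d1 d2) (t0 - z)).
  { apply Rmin_pos. apply Rmin_pos; apply cond_pos. lra. }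
  assert (Hh1 : h < d1 /\ h < d2 /\ h < t0 - z /\ 0 < h).
  { unfold h. pose proof (Rmin_l (Rmin d1 d2) (t0 - z)). pose proof (Rmin_r (Rmin d1 d2) (t0 - z)).
    pose proof (Rmin_l d1 d2). pose proof (Rmin_r d1 d2). lra. }
  assert (hne : h <> 0) by lra.
  assert (Ha1 : Rabs h < d1) by (rewrite Rabs_pos_eq; lra).
  assert (Ha2 : Rabs h < d2) by (rewrite Rabs_pos_eq; lra).
  specialize (Hd1 h hne Ha1). specialize (Hd2 h hne Ha2).
  rewrite G0 in Hd1. rewrite H0 in Hd2.
  apply Rabs_def2 in Hd1. apply Rabs_def2 in Hd2.
  specialize (Hlt (z + h) ltac:(lra)).
  set (g := G (z + h)) in *. set (k := Hh (z + h)) in *.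
  assert (E1 : (g - 0) / h - 0 = g / h) by (field; lra).
  assert (E2 : (k - 0) / h = k / h) by (field; lra).
  rewrite E1 in Hd1. rewrite E2 in Hd2.
  assert (g / h < q * (k / h)).
  { replace (q * (k / h)) with ((q * k) / h) by (field; lra).
    apply Rmult_lt_compat_r. apply Rinv_0_lt_compat; lra. lra. }
  assert (q * (k / h) < q * (H / 2)).
  { assert (0 < - q * (k / h - H / 2)) by (apply Rmult_lt_0_compat; lra). nra. }
  lra.
Qed.

Lemma lim_of_cont (f : R -> R) (D : R -> Prop) x : continuity_pt f x -> limit1_in f D (f x) x.
Proof.
  intros H eps He. destruct (cont_eps f x eps H He) as [alp [Ha Hx]].
  exists alp; split; auto. intros y [_ Hy]. apply Hx. exact Hy.
Qed.

Lemma legendre_facts n L : (2 <= n)%nat -> is_legendre n L ->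
  exists L1 L2 : R -> R, (forall s, derivable_pt_lim L s (L1 s)) /\
  (forall s, derivable_pt_lim L1 s (L2 s)) /\
  (forall s, (1 - s ^ 2) * L2 s - 2 * s * L1 s + INR (pexp n) * L s = 0) /\ 0 < L 1 /\
  (forall z, z ^ 2 <> 1 -> L z = 0 -> L1 z <> 0).
Proof.
  intros Hn [g [Hg0 [Hgd HL]]].
  assert (Hgk : forall k, (k <= n)%nat -> forall s, g k s = GG n k s).
  { induction k; intros Hk s. rewrite Hg0, GG0; auto.
    assert (E : g k = GG n k) by (apply functional_extensionality; intros; apply IHk; lia).
    assert (D := Hgd k s ltac:(lia)). rewrite E in D.
    exact (uniqueness_limite _ _ _ _ D (GG_der n k s)). }
  set (Cn := 2 ^ n * INR (fact n)).
  assert (HC : 0 < Cn) by (unfold Cn; apply Rmult_lt_0_compat; [apply pow_lt; lra| apply lt_0_INR, lt_O_fact]).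
  assert (HLe : forall s, L s = GG n n s / Cn) by (intros; rewrite HL, Hgk; auto).
  exists (fun s => GG n (S n) s / Cn), (fun s => GG n (S (S n)) s / Cn).
  assert (Dd : forall k s, derivable_pt_lim (fun y => GG n k y / Cn) s (GG n (S k) s / Cn)).
  { intros k s. apply dpl_ext with (f := fun y => GG n k y * / Cn). intros; reflexivity.
    eapply dpl_eq. apply dpl_mult2. apply GG_der. apply dpl_const. unfold Rdiv; ring. }
  split; [|split; [|split; [|split]]].
  - intros s. apply dpl_ext with (f := fun y => GG n n y / Cn). intros; symmetry; auto. apply Dd.
  - intros s. apply Dd.
  - intros s. rewrite HLe. pose proof (GG_ode n s ltac:(lia)). unfold pexp.
    replace ((1 - s ^ 2) * (GG n (S (S n)) s / Cn) - 2 * s * (GG n (S n) s / Cn) + INR (n * (n + 1)) * (GG n n s / Cn))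
      with (((1 - s ^ 2) * GG n (S (S n)) s - 2 * s * GG n (S n) s + INR (n * (n + 1)) * GG n n s) / Cn) by (field; lra).
    rewrite H. unfold Rdiv; ring.
  - rewrite HLe. apply Rdiv_lt_0_compat; auto. apply GG_n1; lia.
  - intros z Hz H0 H1. rewrite HLe in H0.
    apply (GG_simple n z ltac:(lia) Hz).
    + apply Rmult_eq_reg_r with (/ Cn). rewrite Rmult_0_l; exact H0. apply Rinv_neq_0_compat; lra.
    + apply Rmult_eq_reg_r with (/ Cn). rewrite Rmult_0_l; exact H1. apply Rinv_neq_0_compat; lra.
Qed.

Lemma L_pos (L L1 : R -> R) z : (forall s, derivable_pt_lim L s (L1 s)) -> is_largest_zero L z -> 0 < L 1 ->
  forall s, z < s <= 1 -> 0 < L s.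
Proof.
  intros D [Hz [Lz Hmax]] L1p s Hs.
  destruct (Rlt_le_dec 0 (L s)) as [|Hle]; auto. exfalso.
  assert (Hc : continuity L) by (intros x; apply (cont_of_dpl _ _ _ (D x))).
  destruct (IVT_cor L s 1 Hc ltac:(lra)) as [y [Hy Ly]].
  { assert (0 <= - L s * L 1) by (apply Rmult_le_pos; lra). lra. }
  destruct (Req_dec y 1). subst. lra.
  assert (y <= z) by (apply Hmax; auto; lra). lra.
Qed.

Lemma existence n (L L1 L2 : R -> R) z : (2 <= n)%nat ->
  (forall s, derivable_pt_lim L s (L1 s)) -> (forall s, derivable_pt_lim L1 s (L2 s)) ->
  (forall s, (1 - s ^ 2) * L2 s - 2 * s * L1 s + INR (pexp n) * L s = 0) ->
  -1 < z < 1 -> L z = 0 -> (forall s, z < s <= 1 -> 0 < L s) -> L1 z <> 0 ->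
  admissible_c n ((1 + z) / (1 - z)).
Proof.
  intros Hn DL DL1 ODE Hz Lz Lpos L1nz.
  set (c := (1 + z) / (1 - z)).
  assert (Hc : 0 < c) by (unfold c; apply Rdiv_lt_0_compat; lra).
  assert (HL1 : 0 < L1 z).
  { assert (0 <= L1 z). apply (dpl_sign L z (L1 z) (1 - z)); auto. lra.
      intros y Hy; apply Lpos; lra.
    lra. }
  assert (HH : 0 < hc1 n c z) by (apply hc1_pos; auto).
  set (a := hc1 n c z / L1 z).
  assert (Ha : 0 < a) by (unfold a; apply Rdiv_lt_0_compat; auto).
  set (f := fun s => a * L s). set (f1 := fun s => a * L1 s). set (f2 := fun s => a * L2 s).
  assert (Df : forall s, derivable_pt_lim f s (f1 s)).
  { intros s. eapply dpl_eq. apply dpl_mult2. apply dpl_const. apply DL. unfold f1; ring. }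
  assert (Df1 : forall s, derivable_pt_lim f1 s (f2 s)).
  { intros s. eapply dpl_eq. apply dpl_mult2. apply dpl_const. apply DL1. unfold f2; ring. }
  assert (ODEf : forall s, (1 - s ^ 2) * f2 s - 2 * s * f1 s + INR (pexp n) * f s = 0).
  { intros s. unfold f, f1, f2. transitivity (a * ((1 - s ^ 2) * L2 s - 2 * s * L1 s + INR (pexp n) * L s)).
    ring. rewrite ODE; ring. }
  assert (fpos : forall s, z < s <= 1 -> 0 < f s).
  { intros s Hs. unfold f. apply Rmult_lt_0_compat; auto. }
  assert (hz : hc n c z = 0) by (apply hc_c0; auto).
  assert (fz : f z = 0) by (unfold f; rewrite Lz; ring).
  assert (f1z : f1 z = hc1 n c z) by (unfold f1, a; field; auto).
  assert (hpos : forall s, z < s <= 1 -> 0 < hc n c s).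
  { intros s Hs. apply hc_pos; auto. lra.
    assert (c * (1 - s) - (1 + s) = 2 * (z - s) / (1 - z)) by (unfold c; field; lra).
    assert (2 * (z - s) / (1 - z) < 0).
    { unfold Rdiv. assert (0 < / (1 - z)) by (apply Rinv_0_lt_compat; lra).
      assert (0 < 2 * (s - z) * / (1 - z)) by (apply Rmult_lt_0_compat; lra). lra. }
    lra. }
  set (W := Wf n c f f1).
  assert (DW : forall s, derivable_pt_lim W s (- f s * DH n c s)).
  { intros s. apply (W_der n c f f1 f2); auto. }
  assert (Wz : W z = 0) by (unfold W, Wf; rewrite hz, fz; ring).
  assert (W1 : W 1 = 0) by (unfold W, Wf; ring).
  assert (Wpos : forall s, z < s < 1 -> 0 < W s).
  { intros s Hs. destruct (Rlt_le_dec 0 (W s)) as [|HW]; auto. exfalso.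
    destruct (mvt W (fun y => - f y * DH n c y) z s) as [xi [Hxi Hm]]. lra.
      intros; apply DW.
    assert (HD : 0 <= DH n c xi).
    { destruct (Rle_lt_dec 0 (DH n c xi)) as [|HD]; auto.
      assert (0 < f xi * (- DH n c xi) * (s - z)).
      { apply Rmult_lt_0_compat. apply Rmult_lt_0_compat. apply fpos; lra. lra. lra. }
      lra. }
    destruct (mvt W (fun y => - f y * DH n c y) s 1) as [eta [Heta Hm2]]. lra.
      intros; apply DW.
    assert (0 < DH n c eta) by (apply (DH_sign n c xi eta); auto; lra).
    assert (0 < f eta * DH n c eta * (1 - s)).
    { apply Rmult_lt_0_compat. apply Rmult_lt_0_compat; auto. apply fpos; lra. lra. }
    lra. }
  set (g := fun s => f s - hc n c s).
  set (rd := fun y => ((f1 y - hc1 n c y) * hc n c y - hc1 n c y * g y) / (hc n c y) ^ 2).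
  assert (Dr : forall y, z < y <= 1 -> derivable_pt_lim (fun y => g y / hc n c y) y (rd y)).
  { intros y Hy. eapply dpl_eq. apply ratio_der with (F1 := f1 y - hc1 n c y) (G1 := hc1 n c y).
    - eapply dpl_eq. apply dpl_plus2 with (f := f) (g := fun y => - hc n c y).
      apply Df. apply dpl_ext with (f := fun y => (-1) * hc n c y). intros; ring.
      apply dpl_mult2. apply dpl_const. apply hc_der. cbv beta. ring.
    - apply hc_der.
    - pose proof (hpos y Hy); lra.
    - reflexivity. }
  assert (rdpos : forall y, z < y < 1 -> 0 < rd y).
  { intros y Hy. unfold rd. apply Rdiv_lt_0_compat.
    - assert (E : W y = (1 - y ^ 2) * ((f1 y - hc1 n c y) * hc n c y - hc1 n c y * g y))
        by (unfold W, Wf, g; ring).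
      pose proof (Wpos y Hy). assert (0 < 1 - y ^ 2) by (simpl; nra).
      rewrite E in H. apply (Rmult_lt_reg_l (1 - y ^ 2)); auto. lra.
    - apply pow_lt. apply hpos; lra. }
  assert (gpos : forall s, z < s <= 1 -> 0 < g s).
  { intros s Hs. destruct (Rlt_le_dec 0 (g s)) as [|Hg]; auto. exfalso.
    set (r := fun y => g y / hc n c y).
    assert (rs : r s <= 0).
    { unfold r. unfold Rdiv. assert (0 < / hc n c s) by (apply Rinv_0_lt_compat, hpos; lra).
      assert (0 <= - g s * / hc n c s) by (apply Rmult_le_pos; lra). lra. }
    set (t0 := (z + s) / 2).
    destruct (mvt r rd t0 s) as [xi [Hxi Hm]]. unfold t0; lra.
      intros y Hy; apply Dr; unfold t0 in *; lra.
    assert (0 < rd xi * (s - t0)) by (apply Rmult_lt_0_compat; [apply rdpos; unfold t0 in *; lra | lra]).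
    apply (touch g (hc n c) z t0 (r t0) (hc1 n c z)).
    - unfold t0; lra.
    - lra.
    - auto.
    - eapply dpl_eq. apply dpl_plus2 with (f := f) (g := fun y => - hc n c y).
      apply Df. apply dpl_ext with (f := fun y => (-1) * hc n c y). intros; ring.
      apply dpl_mult2. apply dpl_const. apply hc_der. cbv beta. rewrite f1z. ring.
    - unfold g; rewrite fz, hz; ring.
    - apply hc_der.
    - auto.
    - intros t Ht. destruct (mvt r rd t t0) as [eta [Heta Hm2]]. lra.
        intros y Hy; apply Dr; unfold t0 in *; lra.
      assert (0 < rd eta * (t0 - t)) by (apply Rmult_lt_0_compat; [apply rdpos; unfold t0 in *; lra | lra]).
      assert (r t < r t0) by lra. unfold r in H1.
      assert (0 < hc n c t) by (apply hpos; unfold t0 in *; lra).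
      apply (Rmult_lt_compat_r (hc n c t)) in H1; auto.
      unfold Rdiv in H1. rewrite Rmult_assoc, Rinv_l in H1 by lra. rewrite Rmult_1_r in H1.
      unfold r, Rdiv. lra. }
  exists f. split; [auto|]. split.
  { exists f1, f2. intros s _. auto. }
  split.
  { apply lim_of_cont. apply (cont_of_dpl _ _ _ (Df 1)). }
  split.
  { pose proof (gpos 1 ltac:(lra)). unfold g in H. rewrite hc_one in H by auto. lra. }
  exists z, (hc1 n c z). split; auto. split. rewrite fz, hz; auto.
  split. rewrite <- f1z. auto. split. apply hc_der.
  intros s Hs. pose proof (gpos s Hs). unfold g in H. lra.
Qed.

Lemma wronsk n (f f1 f2 L L1 L2 : R -> R) z : -1 < z < 1 ->
  (forall s, -1 < s < 1 -> derivable_pt_lim f s (f1 s) /\ derivable_pt_lim f1 s (f2 s) /\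
     (1 - s ^ 2) * f2 s - 2 * s * f1 s + INR (pexp n) * f s = 0) ->
  limit1_in f (fun s => -1 < s < 1) (f 1) 1 ->
  (forall s, derivable_pt_lim L s (L1 s)) -> (forall s, derivable_pt_lim L1 s (L2 s)) ->
  (forall s, (1 - s ^ 2) * L2 s - 2 * s * L1 s + INR (pexp n) * L s = 0) ->
  (forall s, z < s <= 1 -> 0 < L s) ->
  exists a, (forall s, z < s < 1 -> f s = a * L s) /\ f 1 = a * L 1.
Proof.
  intros Hz Hf Hlim DL DL1 ODE Lpos.
  set (V := fun y => (1 - y ^ 2) * (f1 y * L y - f y * L1 y)).
  assert (DV : forall y, z < y < 1 -> derivable_pt_lim V y 0).
  { intros y Hy. destruct (Hf y ltac:(lra)) as [D1 [D2 E]].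
    unfold V. apply dpl_ext with (f := fun y => (1 + (-1) * y ^ 2) * (f1 y * L y + (-1) * (f y * L1 y))).
    { intros; ring. }
    eapply dpl_eq. apply dpl_mult2. apply dpl_plus2. apply dpl_const.
    apply dpl_mult2. apply dpl_const. apply derivable_pt_lim_pow.
    apply dpl_plus2. apply dpl_mult2; [exact D2|apply DL].
    apply dpl_mult2. apply dpl_const. apply dpl_mult2; [exact D1|apply DL1].
    transitivity (L y * ((1 - y ^ 2) * f2 y - 2 * y * f1 y + INR (pexp n) * f y)
       - f y * ((1 - y ^ 2) * L2 y - 2 * y * L1 y + INR (pexp n) * L y)).
    simpl pred. simpl INR. ring. rewrite E, ODE. ring. }
  set (m := (z + 1) / 2).
  assert (Hm : z < m < 1) by (unfold m; lra).
  set (K := V m).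
  assert (VK : forall y, z < y < 1 -> V y = K).
  { intros y Hy. apply (const_of_zero_der V z 1); auto. }
  set (R0 := fun y => f y / L y).
  set (Rd := fun y => (f1 y * L y - L1 y * f y) / (L y) ^ 2).
  assert (DR : forall y, z < y < 1 -> derivable_pt_lim R0 y (Rd y)).
  { intros y Hy. apply ratio_der. apply (Hf y ltac:(lra)). apply DL.
    pose proof (Lpos y ltac:(lra)); lra. }
  assert (RdK : forall y, z < y < 1 -> Rd y = K / ((1 - y ^ 2) * (L y) ^ 2)).
  { intros y Hy. rewrite <- (VK y Hy). unfold Rd, V.
    pose proof (Lpos y ltac:(lra)). assert (1 - y ^ 2 <> 0) by (simpl; nra).
    field. split; auto. lra. }
  destruct (Req_dec K 0) as [HK0|HK0].
  - set (a := R0 m). exists a.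
    assert (Hfa : forall s, z < s < 1 -> f s = a * L s).
    { intros s Hs. assert (R0 s = a).
      { apply (const_of_zero_der R0 z 1); auto. intros y Hy. eapply dpl_eq. apply DR; auto.
        rewrite RdK, HK0 by auto. unfold Rdiv; ring. }
      unfold R0 in H. pose proof (Lpos s ltac:(lra)). rewrite <- H. field. lra. }
    split; auto.
    apply eq_of_close. intros eps He.
    destruct (lim1_eps f (f 1) (eps / 2) Hlim ltac:(lra)) as [d1 [Hd1 H1]].
    destruct (cont_eps L 1 (eps / (2 * (Rabs a + 1))) (cont_of_dpl _ _ _ (DL 1))) as [d2 [Hd2 H2]].
    { apply Rdiv_lt_0_compat. lra. pose proof (Rabs_pos a); lra. }
    set (s := 1 - Rmin (Rmin d1 d2) (1 - z) / 2).
    assert (Hmin : 0 < Rmin (Rmin d1 d2) (1 - z)) by (apply Rmin_pos; [apply Rmin_pos|]; lra).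
    pose proof (Rmin_l (Rmin d1 d2) (1 - z)). pose proof (Rmin_r (Rmin d1 d2) (1 - z)).
    pose proof (Rmin_l d1 d2). pose proof (Rmin_r d1 d2).
    assert (Hs : z < s < 1) by (unfold s; lra).
    assert (Hs1 : Rabs (s - 1) < d1) by (unfold s; rewrite Rabs_left; lra).
    assert (Hs2 : Rabs (s - 1) < d2) by (unfold s; rewrite Rabs_left; lra).
    specialize (H1 s ltac:(lra) Hs1). specialize (H2 s Hs2).
    rewrite Hfa in H1 by auto.
    assert (Rabs a * Rabs (L s - L 1) <= Rabs a * (eps / (2 * (Rabs a + 1)))).
    { apply Rmult_le_compat_l. apply Rabs_pos. lra. }
    assert (Rabs a * (eps / (2 * (Rabs a + 1))) < eps / 2).
    { pose proof (Rabs_pos a). apply (Rmult_lt_reg_r (2 * (Rabs a + 1))). lra.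
      field_simplify; try lra. }
    replace (f 1 - a * L 1) with ((f 1 - a * L s) + a * (L s - L 1)) by ring.
    eapply Rle_lt_trans. apply Rabs_triang. rewrite Rabs_mult.
    rewrite Rabs_minus_sym in H1. lra.
  - exfalso.
    set (l := L 1). assert (Hl : 0 < l) by (apply Lpos; lra).
    destruct (cont_eps L 1 (l / 2) (cont_of_dpl _ _ _ (DL 1))) as [d1 [Hd1 H1]]. lra.
    destruct (lim1_eps f (f 1) 1 Hlim ltac:(lra)) as [d2 [Hd2 H2]].
    set (b := Rmax z (1 - Rmin d1 d2)).
    assert (Hmin : 0 < Rmin d1 d2) by (apply Rmin_pos; lra).
    pose proof (Rmin_l d1 d2). pose proof (Rmin_r d1 d2).
    assert (Hb : b < 1) by (unfold b; apply Rmax_lub_lt; lra).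
    assert (Hbs : forall s, b < s < 1 -> z < s /\ Rabs (s - 1) < d1 /\ Rabs (s - 1) < d2).
    { intros s Hs. pose proof (Rmax_l z (1 - Rmin d1 d2)). pose proof (Rmax_r z (1 - Rmin d1 d2)).
      fold b in H3, H4. rewrite Rabs_left by lra. lra. }
    set (B := 2 * (Rabs (f 1) + 1) / l).
    assert (HB : forall s, b < s < 1 -> Rabs (R0 s) <= B).
    { intros s Hs. destruct (Hbs s Hs) as [Hzs [Hs1 Hs2]].
      specialize (H1 s Hs1). specialize (H2 s ltac:(lra) Hs2).
      apply Rabs_def2 in H1. change (L 1) with l in H1. pose proof (Rabs_triang_inv (f s) (f 1)).
      unfold R0, Rdiv. rewrite Rabs_mult, Rabs_inv. rewrite (Rabs_pos_eq (L s)) by lra.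
      unfold B. apply Rmult_le_reg_r with (L s). lra. unfold Rdiv. rewrite Rmult_assoc, Rinv_l, Rmult_1_r by lra.
      assert (2 * (Rabs (f 1) + 1) * / l * L s >= 2 * (Rabs (f 1) + 1) * / l * (l / 2)).
      { apply Rle_ge, Rmult_le_compat_l. apply Rmult_le_pos. pose proof (Rabs_pos (f 1)); lra.
        left; apply Rinv_0_lt_compat; lra. lra. }
      replace (2 * (Rabs (f 1) + 1) * / l * (l / 2)) with (Rabs (f 1) + 1) in H4 by (field; lra).
      lra. }
    set (k := 2 * Rabs K / (9 * l ^ 2)).
    assert (Hk : 0 < k) by (unfold k; apply Rdiv_lt_0_compat; [apply Rabs_pos_lt in HK0; lra | simpl; nra]).
    assert (Hden : forall s, b < s < 1 -> k / (1 - s) <= Rabs K / ((1 - s ^ 2) * (L s) ^ 2)).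
    { intros s Hs. destruct (Hbs s Hs) as [Hzs [Hs1 _]]. specialize (H1 s Hs1). change (L 1) with l in H1.
      apply Rabs_def2 in H1.
      assert (HKp : 0 < Rabs K) by (apply Rabs_pos_lt; auto).
      assert (0 < (1 - s ^ 2) * (L s) ^ 2) by (apply Rmult_lt_0_compat; simpl; nra).
      assert ((1 - s ^ 2) * (L s) ^ 2 <= (1 - s) * (9 * l ^ 2 / 2)).
      { replace (1 - s ^ 2) with ((1 - s) * (1 + s)) by ring. rewrite Rmult_assoc.
        apply Rmult_le_compat_l. lra. simpl. nra. }
      unfold k. replace (2 * Rabs K / (9 * l ^ 2) / (1 - s)) with (Rabs K / ((1 - s) * (9 * l ^ 2 / 2)))
        by (field; split; simpl; nra).
      unfold Rdiv. apply Rmult_le_compat_l. lra. apply Rinv_le_contravar; auto. }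
    destruct (Rlt_le_dec 0 K) as [HKpos|HKneg].
    + apply (unbounded R0 Rd b k B Hb Hk); auto.
      intros s Hs. destruct (Hbs s Hs) as [Hzs _]. split. apply DR; lra.
      rewrite RdK by lra. rewrite <- (Rabs_pos_eq K) by lra. apply Hden; auto.
    + apply (unbounded (fun y => - R0 y) (fun y => - Rd y) b k B Hb Hk).
      * intros s Hs. destruct (Hbs s Hs) as [Hzs _]. split.
        apply dpl_ext with (f := fun y => (-1) * R0 y). intros; ring.
        eapply dpl_eq. apply dpl_mult2. apply dpl_const. apply DR; lra. cbv beta; ring.
        rewrite RdK by lra. rewrite Rabs_left in Hden by lra.
        specialize (Hden s Hs). unfold Rdiv in *. lra.
      * intros s Hs. rewrite Rabs_Ropp. auto.
Qed.

Lemma minimality n (L L1 L2 : R -> R) z c : (2 <= n)%nat ->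
  (forall s, derivable_pt_lim L s (L1 s)) -> (forall s, derivable_pt_lim L1 s (L2 s)) ->
  (forall s, (1 - s ^ 2) * L2 s - 2 * s * L1 s + INR (pexp n) * L s = 0) ->
  -1 < z < 1 -> L z = 0 -> (forall s, z < s <= 1 -> 0 < L s) ->
  admissible_c n c -> (1 + z) / (1 - z) <= c.
Proof.
  intros Hn DL DL1 ODE Hz Lz Lpos [f [Hc [[f1 [f2 Hsol]] [Hlim [Hf1 [x [d [Hx [fx [Dfx [Dhx Hgt]]]]]]]]]]].
  destruct (wronsk n f f1 f2 L L1 L2 z Hz Hsol Hlim DL DL1 ODE Lpos) as [a [Hfa Hf1a]].
  assert (HL1 : 0 < L 1) by (apply Lpos; lra).
  assert (Ha : 0 < a).
  { destruct (Rlt_le_dec 0 a); auto. assert (a * L 1 <= 0) by nra. lra. }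
  assert (fz : f z = 0).
  { apply eq_of_close. intros eps He. rewrite Rminus_0_r.
    destruct (cont_eps f z (eps / 2) (cont_of_dpl _ _ _ (proj1 (Hsol z Hz)))) as [d1 [Hd1 H1]]. lra.
    destruct (cont_eps L z (eps / (2 * a)) (cont_of_dpl _ _ _ (DL z))) as [d2 [Hd2 H2]].
    { apply Rdiv_lt_0_compat; lra. }
    set (s := z + Rmin (Rmin d1 d2) (1 - z) / 2).
    assert (Hmin : 0 < Rmin (Rmin d1 d2) (1 - z)) by (apply Rmin_pos; [apply Rmin_pos|]; lra).
    pose proof (Rmin_l (Rmin d1 d2) (1 - z)). pose proof (Rmin_r (Rmin d1 d2) (1 - z)).
    pose proof (Rmin_l d1 d2). pose proof (Rmin_r d1 d2).
    assert (Hs : z < s < 1) by (unfold s; lra).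
    assert (Hs1 : Rabs (s - z) < d1) by (unfold s; rewrite Rabs_pos_eq; lra).
    assert (Hs2 : Rabs (s - z) < d2) by (unfold s; rewrite Rabs_pos_eq; lra).
    specialize (H1 s Hs1). specialize (H2 s Hs2). rewrite Lz, Rminus_0_r in H2.
    rewrite Hfa in H1 by auto.
    assert (H5 : a * Rabs (L s) <= a * (eps / (2 * a))) by (apply Rmult_le_compat_l; lra).
    replace (a * (eps / (2 * a))) with (eps / 2) in H5 by (field; lra).
    replace (f z) with ((f z - a * L s) + a * L s) by ring.
    eapply Rle_lt_trans. apply Rabs_triang. rewrite Rabs_mult, (Rabs_pos_eq a) by lra.
    rewrite Rabs_minus_sym in H1. lra. }
  destruct (Rle_lt_dec ((1 + z) / (1 - z)) c) as [|Hlt]; auto. exfalso.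
  set (c0 := (1 + z) / (1 - z)) in *.
  assert (hpos : forall s, z <= s <= 1 -> 0 < hc n c s).
  { intros s Hs. apply hc_pos; auto. lra.
    destruct (Req_dec s 1). subst. lra.
    assert (c * (1 - s) < c0 * (1 - s)) by (apply Rmult_lt_compat_r; lra).
    assert (c0 * (1 - s) - (1 + s) = 2 * (z - s) / (1 - z)) by (unfold c0; field; lra).
    assert (2 * (z - s) / (1 - z) <= 0).
    { unfold Rdiv. assert (0 < / (1 - z)) by (apply Rinv_0_lt_compat; lra).
      assert (0 <= 2 * (s - z) * / (1 - z)) by (apply Rmult_le_pos; lra). lra. }
    lra. }
  assert (Hxz : z < x).
  { destruct (Rtotal_order x z) as [H|[H|H]]; auto.
    - specialize (Hgt z ltac:(lra)). pose proof (hpos z ltac:(lra)). lra.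
    - subst. pose proof (hpos z ltac:(lra)). lra. }
  set (F := fun y => a * L y). set (F1 := fun y => a * L1 y). set (F2 := fun y => a * L2 y).
  assert (DF : forall s, derivable_pt_lim F s (F1 s)).
  { intros s. eapply dpl_eq. apply dpl_mult2. apply dpl_const. apply DL. unfold F1; ring. }
  assert (DF1 : forall s, derivable_pt_lim F1 s (F2 s)).
  { intros s. eapply dpl_eq. apply dpl_mult2. apply dpl_const. apply DL1. unfold F2; ring. }
  assert (ODEF : forall s, (1 - s ^ 2) * F2 s - 2 * s * F1 s + INR (pexp n) * F s = 0).
  { intros s. unfold F, F1, F2. transitivity (a * ((1 - s ^ 2) * L2 s - 2 * s * L1 s + INR (pexp n) * L s)).
    ring. rewrite ODE; ring. }
  assert (Fpos : forall s, z < s <= 1 -> 0 < F s) by (intros; unfold F; apply Rmult_lt_0_compat; auto).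
  assert (HdF : d = F1 x).
  { assert (D' : derivable_pt_lim F x d).
    { apply (dpl_local f F x d (Rmin (x - z) (1 - x))).
      apply Rmin_pos; lra.
      intros y Hy. pose proof (Rmin_l (x - z) (1 - x)). pose proof (Rmin_r (x - z) (1 - x)).
      apply Rabs_def2 in Hy. apply Hfa. lra. auto. }
    exact (uniqueness_limite _ _ _ _ D' (DF x)). }
  assert (Hdh : d = hc1 n c x) by exact (uniqueness_limite _ _ _ _ Dhx (hc_der n c x)).
  assert (Fx : F x = hc n c x) by (unfold F; rewrite <- Hfa by lra; auto).
  set (W := Wf n c F F1).
  assert (DW : forall s, derivable_pt_lim W s (- F s * DH n c s)).
  { intros s. apply (W_der n c F F1 F2); auto. }
  assert (Wx : W x = 0) by (unfold W, Wf; rewrite <- HdF, Fx, Hdh; ring).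
  assert (Wz : 0 <= W z).
  { assert (0 <= L1 z).
    { apply (dpl_sign L z (L1 z) (1 - z)); auto. lra. intros y Hy; apply Lpos; lra. }
    unfold W, Wf, F, F1. rewrite Lz.
    assert (0 <= a * L1 z * hc n c z) by (apply Rmult_le_pos; [apply Rmult_le_pos|]; try lra; left; apply hpos; lra).
    assert (0 < 1 - z ^ 2) by (simpl; nra).
    replace (a * 0) with 0 by ring. rewrite Rmult_0_l, Rminus_0_r. apply Rmult_le_pos; lra. }
  destruct (mvt W (fun y => - F y * DH n c y) z x) as [xi [Hxi Hm]]. lra. intros; apply DW.
  assert (HD : 0 <= DH n c xi).
  { destruct (Rle_lt_dec 0 (DH n c xi)) as [|HD]; auto.
    assert (0 < F xi * (- DH n c xi) * (x - z)).
    { apply Rmult_lt_0_compat. apply Rmult_lt_0_compat. apply Fpos; lra. lra. lra. }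
    lra. }
  set (t := (x + 1) / 2).
  assert (Wneg : forall u, x < u <= t -> W u < 0).
  { intros u Hu. destruct (mvt W (fun y => - F y * DH n c y) x u) as [eta [Heta Hm2]]. lra. intros; apply DW.
    assert (0 < DH n c eta) by (apply (DH_sign n c xi eta); auto; unfold t in *; lra).
    assert (0 < F eta * DH n c eta * (u - x)).
    { apply Rmult_lt_0_compat. apply Rmult_lt_0_compat; auto. apply Fpos; unfold t in *; lra. lra. }
    lra. }
  set (r := fun y => F y / hc n c y).
  set (rd := fun y => (F1 y * hc n c y - hc1 n c y * F y) / (hc n c y) ^ 2).
  destruct (mvt r rd x t) as [xi2 [Hxi2 Hm2]]. unfold t; lra.
  { intros y Hy. apply ratio_der. apply DF. apply hc_der. pose proof (hpos y ltac:(unfold t in *; lra)); lra. }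
  assert (rdneg : rd xi2 < 0).
  { unfold rd. pose proof (Wneg xi2 ltac:(lra)). unfold W, Wf in H.
    assert (0 < 1 - xi2 ^ 2) by (simpl; unfold t in *; nra).
    assert (F1 xi2 * hc n c xi2 - hc1 n c xi2 * F xi2 < 0).
    { destruct (Rle_lt_dec 0 (F1 xi2 * hc n c xi2 - hc1 n c xi2 * F xi2)); auto.
      assert (0 <= (1 - xi2 ^ 2) * (F1 xi2 * hc n c xi2 - F xi2 * hc1 n c xi2)).
      { apply Rmult_le_pos; lra. } lra. }
    assert (0 < hc n c xi2 ^ 2) by (apply pow_lt, hpos; unfold t in *; lra).
    unfold Rdiv. assert (0 < / hc n c xi2 ^ 2) by (apply Rinv_0_lt_compat; auto).
    assert (0 < - (F1 xi2 * hc n c xi2 - hc1 n c xi2 * F xi2) * / hc n c xi2 ^ 2) by (apply Rmult_lt_0_compat; lra).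
    lra. }
  assert (rx : r x = 1) by (unfold r; rewrite Fx; field; pose proof (hpos x ltac:(lra)); lra).
  assert (rd xi2 * (t - x) < 0).
  { assert (0 < - rd xi2 * (t - x)) by (apply Rmult_lt_0_compat; unfold t in *; lra). lra. }
  assert (rt : r t < 1) by lra.
  assert (Ht1 : 0 < hc n c t) by (apply hpos; unfold t; lra).
  unfold r in rt. apply (Rmult_lt_compat_r (hc n c t)) in rt; auto.
  unfold Rdiv in rt. rewrite Rmult_assoc, Rinv_l, Rmult_1_r, Rmult_1_l in rt by lra.
  specialize (Hgt t ltac:(unfold t; lra)). rewrite Hfa in Hgt by (unfold t; lra).
  unfold F in rt. lra.
Qed.

Theorem theorem5p2 (n : nat) (L : R -> R) (z : R) :
  (2 <= n)%nat -> is_legendre n L -> is_largest_zero L z ->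
  admissible_c n ((1 + z) / (1 - z)) /\
  (forall c, admissible_c n c -> (1 + z) / (1 - z) <= c).
Proof.
  intros Hn HL Hz.
  destruct (legendre_facts n L Hn HL) as [L1 [L2 [DL [DL1 [ODE [L1p Hsimple]]]]]].
  pose proof (L_pos L L1 z DL Hz L1p) as Lpos.
  destruct Hz as [Hz [Lz _]].
  split.
  - apply (existence n L L1 L2 z); auto. apply Hsimple; auto. simpl. nra.
  - intros c Hc. apply (minimality n L L1 L2 z c); auto.
Qed.
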